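(* Let $\mathcal G$ be the graph defined below, and suppose $(<,\{S,Q\})$ is a mixed $1$-stack $1$-queue layout of $\mathcal G$ in which $v_1<s<t<v_2$ for some edge $(v_1,v_2)\in Q$ and some pair of twins $s,t$. Then: (a) there are three connectors $x_1,x_2,x_3\in C_{s,t}$ that either all satisfy $x_j>v_2$ or all satisfy $x_j<v_1$; (b) for any such three connectors $x_1,x_2,x_3$, there is some $i\in\{1,2,3\}$ such that one of the edges $(s,x_i),(t,x_i)$ lies in $S$ and the other lies in $Q$.
   Context: Graph $\mathcal G$: take two vertices $A,B$ and $19$ copies of a gadget $H$, identified at $A$ and $B$. Each copy of $H$ consists of two further vertices $s,t$ (called twins) joined by the twin edge $(s,t)$, the edges $(A,s),(A,t),(B,s),(B,t)$, and seven further vertices $x_1,\dots,x_7$ (called connectors), each of degree $2$ and adjacent to exactly $s$ and $t$; the set of these seven connectors is denoted $C_{s,t}$. ($A$ and $B$ are not adjacent; $\mathcal G$ has $173$ vertices and $361$ edges.) For a vertex ordering $<$ and an edge $e$, let $L(e)<R(e)$ be its endpoints; edges $e,f$ cross if $L(e)<L(f)<R(e)<R(f)$ and nest if $L(e)<L(f)<R(f)<R(e)$. A stack is an edge set with no two crossing edges, a queue an edge set with no two nested edges. A mixed $1$-stack $1$-queue layout is a vertex ordering $<$ together with a partition of the edge set into a stack $S$ and a queue $Q$. *)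

(* Defs.v *)
From mathcomp Require Import all_boot.
Set Implicit Arguments. Unset Strict Implicit. Unset Printing Implicit Defensive.

(* Vertices of G: A = inl false, B = inl true;
   copy i of H: twins inr (i, inl b) (b = false: s, b = true: t),
   connectors inr (i, inr j), j : 'I_7. *)
Definition V : finType := (bool + ('I_19 * (bool + 'I_7)))%type.

Definition vA : V := inl false.
Definition vB : V := inl true.
Definition twin (i : 'I_19) (b : bool) : V := inr (i, inl b).
Definition conn (i : 'I_19) (j : 'I_7) : V := inr (i, inr j).

Definition adj0 (u v : V) : bool :=
  match u, v with
  | inl _, inr (_, inl _) => true
  | inr (i, inl b), inr (i', inl b') => (i == i') && (b != b')
  | inr (i, inl _), inr (i', inr _) => i == i'
  | _, _ => false
  end.
Definition adj (u v : V) : bool := adj0 u v || adj0 v u.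

(* A partition of the edges into a stack S and a
   queue Q is given by a colouring col : V -> V -> bool, symmetric on edges,
   with col u v = true meaning edge uv in S and false meaning uv in Q. *)
Definition crossing (pos : V -> nat) (a b c d : V) : Prop :=
  pos a < pos c < pos b /\ pos b < pos d.
Definition nesting (pos : V -> nat) (a b c d : V) : Prop :=
  pos a < pos c < pos d /\ pos d < pos b.

Definition mixed_layout (pos : V -> nat) (col : V -> V -> bool) : Prop :=
  injective pos /\
  (forall u v, adj u v -> col u v = col v u) /\
  (forall a b c d, adj a b -> adj c d -> pos a < pos b -> pos c < pos d ->
     col a b -> col c d -> ~ crossing pos a b c d) /\
  (forall a b c d, adj a b -> adj c d -> pos a < pos b -> pos c < pos d ->
     ~~ col a b -> ~~ col c d -> ~ nesting pos a b c d).

(* Main.v *)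
Require Import Defs.
From mathcomp Require Import all_boot.
From mathcomp Require Import zify.

Lemma Scross pos col a b c d : mixed_layout pos col -> adj a b -> adj c d ->
  col a b -> col c d -> pos a < pos c -> pos c < pos b -> pos b < pos d -> False.
Proof.
case=> _ [_ [HS _]] hab hcd cab ccd h1 h2 h3.
apply: (HS a b c d hab hcd _ _ cab ccd); rewrite /crossing; lia.
Qed.

Lemma Qnest pos col a b c d : mixed_layout pos col -> adj a b -> adj c d ->
  ~~ col a b -> ~~ col c d -> pos a < pos c -> pos c < pos d -> pos d < pos b -> False.
Proof.
case=> _ [_ [_ HQ]] hab hcd cab ccd h1 h2 h3.
apply: (HQ a b c d hab hcd _ _ cab ccd); rewrite /nesting; lia.
Qed.

Lemma adj_tc i b j : adj (twin i b) (conn i j).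
Proof. by rewrite /adj /= eqxx. Qed.
Lemma adj_ct i b j : adj (conn i j) (twin i b).
Proof. by rewrite /adj /= eqxx. Qed.
Hint Resolve adj_tc adj_ct : core.

Lemma posc_v pos col v1 v2 i b j : mixed_layout pos col -> adj v1 v2 ->
  pos v1 < pos (twin i b) -> pos (twin i b) < pos (twin i (~~b)) ->
  pos (twin i (~~b)) < pos v2 ->
  pos (conn i j) != pos v1 /\ pos (conn i j) != pos v2.
Proof.
case=> inj _ hadj h1 h2 h3.
split; apply/negP => /eqP /inj E; subst.
- move: hadj h3; case: v2 => [c|[i' [b'|j']]] //=; rewrite /adj /= ?orbF //.
  move/eqP => E; subst i'.
  have E2 : pos (inr (i, inl b')) = pos (twin i b') by [].
  rewrite E2; clear E2.
  by case: b b' h1 h2 => [] [] /= h1 h2 h3; lia.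
- move: hadj h1; case: v1 => [c|[i' [b'|j']]] //=; rewrite /adj /= ?orbF //.
  move/eqP => E; subst i'.
  have E2 : pos (inr (i, inl b')) = pos (twin i b') by [].
  rewrite E2; clear E2.
  by case: b b' h2 h3 => [] [] /= h2 h3 h1; lia.
Qed.

Ltac clean := repeat match goal with h : _ |- _ =>
  lazymatch type of h with
  | is_true (_ < _) => fail
  | is_true (_ != _) => fail
  | _ => clear h end end.
Ltac slia := clean; lia.

Theorem lemma1 (pos : V -> nat) (col : V -> V -> bool) :
  mixed_layout pos col ->
  forall (v1 v2 : V) (i : 'I_19) (b : bool),
    adj v1 v2 -> ~~ col v1 v2 ->
    pos v1 < pos (twin i b) -> pos (twin i b) < pos (twin i (~~ b)) ->
    pos (twin i (~~ b)) < pos v2 ->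
    let s := twin i b in let t := twin i (~~ b) in
    (exists j1 j2 j3 : 'I_7, [/\ j1 != j2, j1 != j3 & j2 != j3] /\
       ((forall j, j \in [:: j1; j2; j3] -> pos v2 < pos (conn i j)) \/
        (forall j, j \in [:: j1; j2; j3] -> pos (conn i j) < pos v1)))
    /\
    (forall j1 j2 j3 : 'I_7, [/\ j1 != j2, j1 != j3 & j2 != j3] ->
       ((forall j, j \in [:: j1; j2; j3] -> pos v2 < pos (conn i j)) \/
        (forall j, j \in [:: j1; j2; j3] -> pos (conn i j) < pos v1)) ->
       exists2 j, j \in [:: j1; j2; j3] & col s (conn i j) != col t (conn i j)).
Proof.
move=> H v1 v2 i b hadj hq h1 h2 h3 s t; rewrite /s /t.
have [inj [sym _]] := H.
have Hcs j : pos (conn i j) != pos (twin i b).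
  by apply/negP => /eqP /inj.
have Hct j : pos (conn i j) != pos (twin i (~~b)).
  by apply/negP => /eqP /inj.
have Hcv j := @posc_v pos col v1 v2 i b j H hadj h1 h2 h3.
have Hcc j j' : j != j' -> pos (conn i j) != pos (conn i j').
  move=> ne; apply/negP => /eqP /inj [] E; by rewrite E eqxx in ne.
have sym_s j : col (conn i j) (twin i b) = col (twin i b) (conn i j).
  by apply: sym.
have sym_t j : col (conn i j) (twin i (~~b)) = col (twin i (~~b)) (conn i j).
  by apply: sym.
have adj_st : adj (twin i b) (twin i (~~b)).
  by rewrite /adj /= eqxx; case: (b).
have pairR j j' : pos v2 < pos (conn i j) -> pos (conn i j) < pos (conn i j') ->
   col (twin i b) (conn i j) = col (twin i (~~b)) (conn i j) ->
   col (twin i b) (conn i j') = col (twin i (~~b)) (conn i j') ->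
   col (twin i b) (conn i j) = col (twin i b) (conn i j') -> False.
  move=> r o e1 e2 e3.
  case E: (col (twin i b) (conn i j)).
  - have c2 : col (twin i (~~b)) (conn i j') by rewrite -e2 -e3 E.
    apply: (@Scross pos col (twin i b) (conn i j) (twin i (~~b)) (conn i j') H
      (adj_tc _ _ _) (adj_tc _ _ _) E c2); slia.
  - have c1 : ~~ col (twin i b) (conn i j') by rewrite -e3 E.
    have c2 : ~~ col (twin i (~~b)) (conn i j) by rewrite -e1 E.
    apply: (@Qnest pos col (twin i b) (conn i j') (twin i (~~b)) (conn i j) H
      (adj_tc _ _ _) (adj_tc _ _ _) c1 c2); slia.
have pairL j j' : pos (conn i j') < pos v1 -> pos (conn i j) < pos (conn i j') ->
   col (twin i b) (conn i j) = col (twin i (~~b)) (conn i j) ->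
   col (twin i b) (conn i j') = col (twin i (~~b)) (conn i j') ->
   col (twin i b) (conn i j) = col (twin i b) (conn i j') -> False.
  move=> r o e1 e2 e3.
  case E: (col (twin i b) (conn i j)).
  - have c1 : col (conn i j) (twin i b) by rewrite sym_s E.
    have c2 : col (conn i j') (twin i (~~b)) by rewrite sym_t -e2 -e3 E.
    apply: (@Scross pos col (conn i j) (twin i b) (conn i j') (twin i (~~b)) H
      (adj_ct _ _ _) (adj_ct _ _ _) c1 c2); slia.
  - have c1 : ~~ col (conn i j) (twin i (~~b)) by rewrite sym_t -e1 E.
    have c2 : ~~ col (conn i j') (twin i b) by rewrite sym_s -e3 E.
    apply: (@Qnest pos col (conn i j) (twin i (~~b)) (conn i j') (twin i b) H
      (adj_ct _ _ _) (adj_ct _ _ _) c1 c2); slia.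
split; last first.
  move=> j1 j2 j3 [d12 d13 d23] side.
  case: (boolP (col (twin i b) (conn i j1) != col (twin i (~~b)) (conn i j1))) => [n1|/negPn/eqP e1].
    by exists j1; rewrite ?inE ?eqxx.
  case: (boolP (col (twin i b) (conn i j2) != col (twin i (~~b)) (conn i j2))) => [n2|/negPn/eqP e2].
    by exists j2; rewrite ?inE ?eqxx ?orbT.
  case: (boolP (col (twin i b) (conn i j3) != col (twin i (~~b)) (conn i j3))) => [n3|/negPn/eqP e3].
    by exists j3; rewrite ?inE ?eqxx ?orbT.
  exfalso.
  have pair j j' : j \in [:: j1; j2; j3] -> j' \in [:: j1; j2; j3] -> j != j' ->
     col (twin i b) (conn i j) = col (twin i (~~b)) (conn i j) ->
     col (twin i b) (conn i j') = col (twin i (~~b)) (conn i j') ->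
     col (twin i b) (conn i j) = col (twin i b) (conn i j') -> False.
    move=> m m' ne ea eb ec.
    have := Hcc _ _ ne => hne.
    case: side => side.
    - have := side _ m; have := side _ m' => r' r.
      have [o|o] : pos (conn i j) < pos (conn i j') \/ pos (conn i j') < pos (conn i j) by slia.
      + exact: (pairR j j').
      + exact: (pairR j' j).
    - have := side _ m; have := side _ m' => r' r.
      have [o|o] : pos (conn i j) < pos (conn i j') \/ pos (conn i j') < pos (conn i j) by slia.
      + exact: (pairL j j').
      + exact: (pairL j' j).
  have m1 : j1 \in [:: j1; j2; j3] by rewrite !inE eqxx.
  have m2 : j2 \in [:: j1; j2; j3] by rewrite !inE eqxx ?orbT.
  have m3 : j3 \in [:: j1; j2; j3] by rewrite !inE eqxx ?orbT.
  case C1: (col (twin i b) (conn i j1)); case C2: (col (twin i b) (conn i j2));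
  case C3: (col (twin i b) (conn i j3)).
  all: try first [ by apply: (pair j1 j2) => //; rewrite C1 C2
             | by apply: (pair j1 j3) => //; rewrite C1 C3
             | by apply: (pair j2 j3) => //; rewrite C2 C3 ].
clear pairR pairL.
have inner j : pos v1 < pos (conn i j) -> pos (conn i j) < pos v2 ->
    col (twin i b) (conn i j) /\ col (twin i (~~b)) (conn i j).
  move=> l r; have [n1 n2] := Hcv j; have n3 := Hcs j; have n4 := Hct j.
  split; apply/negPn/negP => nc.
  - have [o|o] : pos (conn i j) < pos (twin i b) \/ pos (twin i b) < pos (conn i j) by slia.
    + apply: (@Qnest pos col v1 v2 (conn i j) (twin i b) H hadj (adj_ct _ _ _) hq);
        [by rewrite sym_s | slia ..].
    + apply: (@Qnest pos col v1 v2 (twin i b) (conn i j) H hadj (adj_tc _ _ _) hq nc); slia.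
  - have [o|o] : pos (conn i j) < pos (twin i (~~b)) \/ pos (twin i (~~b)) < pos (conn i j) by slia.
    + apply: (@Qnest pos col v1 v2 (conn i j) (twin i (~~b)) H hadj (adj_ct _ _ _) hq);
        [by rewrite sym_t | slia ..].
    + apply: (@Qnest pos col v1 v2 (twin i (~~b)) (conn i j) H hadj (adj_tc _ _ _) hq nc); slia.
have cU (A B : {set 'I_7}) : #|A :|: B| <= #|A| + #|B|.
  by rewrite cardsU leq_subr.
have le1 (P : 'I_7 -> bool) :
  (forall x y, P x -> P y -> pos (conn i x) < pos (conn i y) -> False) ->
  #|[set j | P j]| <= 1.
  move=> hP; apply/card_le1_eqP => x y; rewrite !inE => px py.
  case: (eqVneq x y) => [->//|ne]; exfalso; have := Hcc _ _ ne => hne.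
  have [o|o] : pos (conn i x) < pos (conn i y) \/ pos (conn i y) < pos (conn i x) by slia.
  - exact: (hP x y).
  - exact: (hP y x).
set R := [set j : 'I_7 | pos v2 < pos (conn i j)].
set L := [set j : 'I_7 | pos (conn i j) < pos v1].
have cover : 7 <= #|R| + #|L|
   + #|[set j : 'I_7 | pos v1 < pos (conn i j) < pos (twin i b)]|
   + #|[set j : 'I_7 | pos (twin i b) < pos (conn i j) < pos (twin i (~~b))]|
   + #|[set j : 'I_7 | pos (twin i (~~b)) < pos (conn i j) < pos v2]|.
  set IL := [set j : 'I_7 | _]. set IM := [set j : 'I_7 | _]. set IR := [set j : 'I_7 | _].
  have : #|[set: 'I_7]| <= #|R :|: L :|: IL :|: IM :|: IR|.
    apply: subset_leq_card; apply/subsetP => j _; rewrite !inE.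
    have [n1 n2] := Hcv j; have n3 := Hcs j; have n4 := Hct j.
    slia.
  rewrite cardsT card_ord => h7.
  apply: (leq_trans h7); apply: (leq_trans (cU _ _)); rewrite leq_add2r.
  apply: (leq_trans (cU _ _)); rewrite leq_add2r.
  apply: (leq_trans (cU _ _)); rewrite leq_add2r.
  exact: cU.
have cIL : #|[set j : 'I_7 | pos v1 < pos (conn i j) < pos (twin i b)]| <= 1.
  apply: le1 => x y /andP [hx1 hx2] /andP [hy1 hy2] o.
  have [cx _] := inner x hx1 ltac:(slia).
  have [_ cy] := inner y hy1 ltac:(slia).
  apply: (@Scross pos col (conn i x) (twin i b) (conn i y) (twin i (~~b)) H
     (adj_ct _ _ _) (adj_ct _ _ _)); rewrite ?sym_s ?sym_t //; slia.
have cIM : #|[set j : 'I_7 | pos (twin i b) < pos (conn i j) < pos (twin i (~~b))]| <= 1.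
  apply: le1 => x y /andP [hx1 hx2] /andP [hy1 hy2] o.
  have [_ cx] := inner x ltac:(slia) ltac:(slia).
  have [cy _] := inner y ltac:(slia) ltac:(slia).
  apply: (@Scross pos col (twin i b) (conn i y) (conn i x) (twin i (~~b)) H
     (adj_tc _ _ _) (adj_ct _ _ _)); rewrite ?sym_s ?sym_t //; slia.
have cIR : #|[set j : 'I_7 | pos (twin i (~~b)) < pos (conn i j) < pos v2]| <= 1.
  apply: le1 => x y /andP [hx1 hx2] /andP [hy1 hy2] o.
  have [cx _] := inner x ltac:(slia) hx2.
  have [_ cy] := inner y ltac:(slia) hy2.
  apply: (@Scross pos col (twin i b) (conn i x) (twin i (~~b)) (conn i y) H
     (adj_tc _ _ _) (adj_tc _ _ _)); rewrite ?sym_s ?sym_t //; slia.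
have trip (A : {set 'I_7}) : 2 < #|A| -> exists j1 j2 j3 : 'I_7,
    [/\ j1 != j2, j1 != j3 & j2 != j3] /\
    (forall j, j \in [:: j1; j2; j3] -> j \in A).
  move/card_gt2P => [x [y [z [[hx hy hz] [dxy dyz dzx]]]]].
  exists x, y, z; split; first by rewrite dxy dyz eq_sym dzx.
  by move=> j; rewrite !inE => /or3P [] /eqP ->.
case: (ltnP 2 #|R|) => [/trip [j1 [j2 [j3 [d hj]]]]|hR].
  exists j1, j2, j3; split => //; left => j /hj; by rewrite inE.
case: (ltnP 2 #|L|) => [/trip [j1 [j2 [j3 [d hj]]]]|hL].
  exists j1, j2, j3; split => //; right => j /hj; by rewrite inE.
exfalso.
have /card_gt0P [zL] : 0 < #|[set j : 'I_7 | pos v1 < pos (conn i j) < pos (twin i b)]| by lia.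
rewrite inE => /andP [zL1 zL2].
have /card_gt0P [zR] : 0 < #|[set j : 'I_7 | pos (twin i (~~b)) < pos (conn i j) < pos v2]| by lia.
rewrite inE => /andP [zR1 zR2].
have /card_gt1P [x [y [hx hy nxy]]] : 1 < #|R| by lia.
move: hx hy; rewrite !inE => hx hy.
have [_ czL] := inner zL zL1 ltac:(slia).
have [czR _] := inner zR ltac:(slia) zR2.
have Rpair x' y' : pos v2 < pos (conn i x') -> pos (conn i x') < pos (conn i y') -> False.
  move=> hx' o.
  have n1 : ~~ col (twin i b) (conn i y').
    apply/negP => c1.
    apply: (@Scross pos col (conn i zL) (twin i (~~b)) (twin i b) (conn i y') H
       (adj_ct _ _ _) (adj_tc _ _ _)); rewrite ?sym_s ?sym_t //; slia.
  have n2 : ~~ col (twin i (~~b)) (conn i x').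
    apply/negP => c2.
    apply: (@Scross pos col (twin i b) (conn i zR) (twin i (~~b)) (conn i x') H
       (adj_tc _ _ _) (adj_tc _ _ _)); rewrite ?sym_s ?sym_t //; slia.
  apply: (@Qnest pos col (twin i b) (conn i y') (twin i (~~b)) (conn i x') H
     (adj_tc _ _ _) (adj_tc _ _ _) n1 n2); slia.
have := Hcc _ _ nxy => hne.
have [o|o] : pos (conn i x) < pos (conn i y) \/ pos (conn i y) < pos (conn i x) by slia.
- exact: (Rpair x y).
- exact: (Rpair y x).
Qed.
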